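(* Let $M$ be a multiplier on $\mathscr{A}(\mathbb{R})$ with multiplier sequence $(m_n)_{n\in\mathbb{N}}$. If $M$ is the generator of a $C_0$-semigroup $(T_t)_{t\geq 0}$ on $\mathscr{A}(\mathbb{R})$, then every $T_t$ is a multiplier, and for every $t\geq 0$ the multiplier sequence of $T_t$ is $(\exp(tm_n))_{n\in\mathbb{N}}$.
   Context: $\mathscr{A}(\mathbb{R})$ denotes the space of real analytic functions on $\mathbb{R}$ with its natural inductive limit topology $\mathscr{A}(\mathbb{R})=\operatorname{ind}_{U\supset\mathbb{R}}H(U)$, where $U$ runs over complex open neighbourhoods of $\mathbb{R}$ and $H(U)$ carries the compact-open topology. A continuous linear operator $M:\mathscr{A}(\mathbb{R})\to\mathscr{A}(\mathbb{R})$ is a multiplier if $M(x^n)=m_nx^n$ for all $n\in\mathbb{N}$; $(m_n)$ is its multiplier sequence. A $C_0$-semigroup is a family $(T_t)_{t\ge0}$ of continuous linear operators with $T_tT_s=T_{t+s}$, $T_0=I$, and $t\mapsto T_tf$ continuous for each $f$; its generator is $Af=\lim_{t\to0^+}(T_tf-f)/t$ on the domain where this limit exists. ''$M$ generates the semigroup'' means $M$ is its generator. *)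

(* Defs.v *)
From Stdlib Require Import Reals.
From Coquelicot Require Export Coquelicot.
Open Scope R_scope.

Definition Cexp (z : C) : C :=
  (exp (fst z) * cos (snd z), exp (fst z) * sin (snd z)).

Definition C_open (U : C -> Prop) : Prop :=
  forall z, U z -> exists r, 0 < r /\ forall w, Cmod (Cminus w z) < r -> U w.

(* compact subsets of C (= closed and bounded, Heine-Borel) *)
Definition C_compact (K : C -> Prop) : Prop :=
  (exists B, forall z, K z -> Cmod z <= B) /\
  (forall z, ~ K z -> exists r, 0 < r /\ forall w, Cmod (Cminus w z) < r -> ~ K w).

Definition holo_on (U : C -> Prop) (F : C -> C) : Prop :=
  forall z, U z -> @ex_derive C_AbsRing C_NormedModule F z.

Definition cnbhd_R (U : C -> Prop) : Prop :=
  C_open U /\ forall x : R, U (RtoC x).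

Definition analytic (f : R -> C) : Prop :=
  exists U F, cnbhd_R U /\ holo_on U F /\ forall x : R, F (RtoC x) = f x.

Definition fadd (f g : R -> C) : R -> C := fun x => Cplus (f x) (g x).
Definition fsub (f g : R -> C) : R -> C := fun x => Cminus (f x) (g x).
Definition fscale (a : C) (f : R -> C) : R -> C := fun x => Cmult a (f x).

(* Basic 0-neighbourhoods of the locally convex inductive limit topology
   A(R) = ind_{U} H(U): absolutely convex subsets V of A(R) whose preimage
   under each restriction map H(U) -> A(R) is a 0-neighbourhood of the
   compact-open topology of H(U), i.e. contains some
   {F : sup_K |F| < eps} with K compact in U. *)
Definition ind_nbhd0 (V : (R -> C) -> Prop) : Prop :=
  (forall f, V f -> analytic f) /\
  (forall f g (a b : C), V f -> V g -> Cmod a + Cmod b <= 1 ->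
       V (fadd (fscale a f) (fscale b g))) /\
  (forall U, cnbhd_R U ->
     exists K eps, C_compact K /\ (forall z, K z -> U z) /\ 0 < eps /\
       forall F, holo_on U F -> (forall z, K z -> Cmod (F z) < eps) ->
         V (fun x : R => F (RtoC x))).

(* continuous linear operators A(R) -> A(R) (operators are represented as
   maps on R -> C; only their behaviour on A(R) matters) *)
Definition cont_lin_op (L : (R -> C) -> (R -> C)) : Prop :=
  (forall f, analytic f -> analytic (L f)) /\
  (forall f g (a b : C), analytic f -> analytic g ->
      forall x, L (fadd (fscale a f) (fscale b g)) x
                = Cplus (Cmult a (L f x)) (Cmult b (L g x))) /\
  (forall V, ind_nbhd0 V -> exists W, ind_nbhd0 W /\ forall f, W f -> V (L f)).

Definition is_multiplier (M : (R -> C) -> (R -> C)) (m : nat -> C) : Prop :=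
  cont_lin_op M /\
  forall n x, M (fun y : R => RtoC (y ^ n)) x = Cmult (m n) (RtoC (x ^ n)).

Definition C0_semigroup (T : R -> (R -> C) -> (R -> C)) : Prop :=
  (forall t, 0 <= t -> cont_lin_op (T t)) /\
  (forall t s f, 0 <= t -> 0 <= s -> analytic f ->
      forall x, T t (T s f) x = T (t + s) f x) /\
  (forall f, analytic f -> forall x, T 0 f x = f x) /\
  (forall f, analytic f -> forall t0, 0 <= t0 ->
     forall V, ind_nbhd0 V -> exists d, 0 < d /\
       forall t, 0 <= t -> Rabs (t - t0) < d -> V (fsub (T t f) (T t0 f))).

(* M is the generator: for every f in A(R), (T_t f - f)/t -> M f as t -> 0+
   (so the domain of the generator is all of A(R) and the generator is M) *)
Definition generates (M : (R -> C) -> (R -> C)) (T : R -> (R -> C) -> (R -> C))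
  : Prop :=
  forall f, analytic f ->
    forall V, ind_nbhd0 V -> exists d, 0 < d /\
      forall t, 0 < t -> t < d ->
        V (fsub (fscale (RtoC (/ t)) (fsub (T t f) f)) (M f)).

(* Main.v *)
From Stdlib Require Import Reals Lra.
Require Import Defs.
Open Scope R_scope.

Lemma tr f (z l : C) : @is_derive C_AbsRing (AbsRing_NormedModule C_AbsRing) f z l -> @is_derive C_AbsRing C_NormedModule f z l.
Proof. intros [H1 H2]. split.
- destruct H1 as [A B E]. split.
  + exact A.
  + exact B.
  + exact E.
- intros x Hx. specialize (H2 x Hx). intros eps. specialize (H2 eps). exact H2.
Qed.

Lemma tr2 f (z l : C) : @is_derive C_AbsRing C_NormedModule f z l -> @is_derive C_AbsRing (AbsRing_NormedModule C_AbsRing) f z l.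
Proof. intros [H1 H2]. split.
- destruct H1 as [A B E]. split.
  + exact A.
  + exact B.
  + exact E.
- intros x Hx. specialize (H2 x Hx). intros eps. specialize (H2 eps). exact H2.
Qed.

Lemma exd_cmul (a : C) (F : C -> C) z :
  @ex_derive C_AbsRing C_NormedModule F z ->
  @ex_derive C_AbsRing C_NormedModule (fun w => Cmult a (F w)) z.
Proof.
intros [df H].
exists (@plus C_AbsRing (@mult C_AbsRing (RtoC 0) (F z)) (@mult C_AbsRing a df)).
apply tr; exact (@is_derive_mult C_AbsRing (fun _ => a) F z (RtoC 0) df
  (@is_derive_const C_AbsRing (AbsRing_NormedModule C_AbsRing) a z) (tr2 _ _ _ H) Cmult_comm).
Qed.

Lemma exd_cplus (F G : C -> C) z :
  @ex_derive C_AbsRing C_NormedModule F z ->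
  @ex_derive C_AbsRing C_NormedModule G z ->
  @ex_derive C_AbsRing C_NormedModule (fun w => Cplus (F w) (G w)) z.
Proof.
intros HF HG. apply (@ex_derive_plus C_AbsRing C_NormedModule F G z HF HG).
Qed.

Lemma analytic_lin f g a b : analytic f -> analytic g ->
  analytic (fadd (fscale a f) (fscale b g)).
Proof.
intros [U [F [[HUo HUR] [HF HFe]]]] [U' [G [[HUo' HUR'] [HG HGe]]]].
exists (fun z => U z /\ U' z), (fun z => Cplus (Cmult a (F z)) (Cmult b (G z))).
split; [split|split].
- intros z [Hz Hz'].
  destruct (HUo z Hz) as [r [Hr Hr']]. destruct (HUo' z Hz') as [r' [Hq Hq']].
  exists (Rmin r r'). split. apply Rmin_pos; auto.
  intros w Hw. split; [apply Hr'|apply Hq']; eapply Rlt_le_trans; eauto;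
  [apply Rmin_l|apply Rmin_r].
- intros x; split; auto.
- intros z [Hz Hz']. apply exd_cplus; apply exd_cmul; auto.
- intros x. unfold fadd, fscale. rewrite HFe, HGe. reflexivity.
Qed.

Lemma analytic_pow n : analytic (fun y : R => RtoC (y ^ n)).
Proof.
exists (fun _ => True), (fun z => @pow_n C_Ring z n).
split; [split|split].
- intros z _; exists 1; split; auto; lra.
- auto.
- intros z _. induction n.
  + exists (RtoC 0). apply tr. exact (@is_derive_const C_AbsRing (AbsRing_NormedModule C_AbsRing) (RtoC 1) z).
  + simpl. destruct IHn as [df H].
    eexists. apply tr; exact (@is_derive_mult C_AbsRing (fun w => w) (fun w => @pow_n C_Ring w n) z (RtoC 1) df
    (@is_derive_id C_AbsRing z) (tr2 _ _ _ H) Cmult_comm).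
- intros x. induction n. reflexivity.
  simpl. rewrite IHn. change (mult (RtoC x) (RtoC (x^n))) with (Cmult (RtoC x) (RtoC (x^n))).
  rewrite <- RtoC_mult. reflexivity.
Qed.

Definition Vp (x eps : R) (f : R -> C) : Prop := analytic f /\ Cmod (f x) < eps.

Lemma Vp_nbhd x eps : 0 < eps -> ind_nbhd0 (Vp x eps).
Proof.
intros He. split; [|split].
- intros f [H _]; exact H.
- intros f g a b [Hf Hfx] [Hg Hgx] Hab. split. apply analytic_lin; auto.
  unfold fadd, fscale.
  eapply Rle_lt_trans. apply Cmod_triangle. rewrite !Cmod_mult.
  pose proof (Cmod_ge_0 a). pose proof (Cmod_ge_0 b).
  pose proof (Cmod_ge_0 (f x)). pose proof (Cmod_ge_0 (g x)).
  destruct (Req_dec (Cmod a) 0) as [Ha|Ha].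
  + destruct (Req_dec (Cmod b) 0) as [Hb|Hb].
    * rewrite Ha, Hb. lra.
    * assert (Cmod b * Cmod (g x) < Cmod b * eps) by (apply Rmult_lt_compat_l; lra).
      rewrite Ha. nra.
  + assert (Cmod a * Cmod (f x) < Cmod a * eps) by (apply Rmult_lt_compat_l; lra).
    assert (Cmod b * Cmod (g x) <= Cmod b * eps) by (apply Rmult_le_compat_l; lra).
    nra.
- intros U [HUo HUR]. exists (fun z => z = RtoC x), eps. split; [split|split; [|split]].
  + exists (Cmod (RtoC x)). intros z ->. lra.
  + intros z Hz. exists (Cmod (Cminus z (RtoC x))). split.
    * destruct (Rle_lt_or_eq_dec 0 _ (Cmod_ge_0 (Cminus z (RtoC x)))) as [h|h]; auto.
      exfalso. apply Hz. symmetry in h. apply Cmod_eq_0 in h.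
      destruct z as [z1 z2]; unfold Cminus, Cplus, Copp, RtoC in h |- *; simpl in h |- *.
      injection h; intros; f_equal; lra.
    * intros w Hw ->. rewrite <- Cmod_opp in Hw.
      replace (- Cminus (RtoC x) z)%C with (Cminus z (RtoC x)) in Hw. lra.
      destruct z; unfold Cminus, Cplus, Copp, RtoC; simpl; f_equal; lra.
  + intros z ->. apply HUR.
  + exact He.
  + intros F HF HK. split.
    * exists U, F. repeat split; auto.
    * apply HK. reflexivity.
Qed.

Lemma Cmod_tri3 (a b c : C) : Cmod (Cminus a c) <= Cmod (Cminus a b) + Cmod (Cminus b c).
Proof.
replace (Cminus a c) with (Cplus (Cminus a b) (Cminus b c)). apply Cmod_triangle.
destruct a, b, c; unfold Cminus, Cplus, Copp; simpl; f_equal; ring.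
Qed.

Lemma rd_bound (f : R -> C) t e : 0 <= t -> 0 < e ->
 (forall s, 0<=s<=t -> forall e, 0<e -> exists d, 0<d /\ forall u, 0<=u<=t -> Rabs(u-s)<d -> Cmod (Cminus (f u) (f s)) < e) ->
 (forall s, 0<=s<t -> forall e, 0<e -> exists d, 0<d /\ forall h, 0<h<d -> Cmod (Cminus (f (s+h)) (f s)) <= e*h) ->
 Cmod (Cminus (f t) (f 0)) <= e * t.
Proof.
intros Ht He Hc Hd.
set (E := fun s => 0 <= s <= t /\ forall u, 0 <= u <= s -> Cmod (Cminus (f u) (f 0)) <= e * u).
assert (E0 : E 0).
{ split. lra. intros u Hu. replace u with 0 by lra. unfold Cminus. rewrite Cplus_opp_r, Cmod_0. lra. }
assert (Eb : bound E). { exists t. intros s [Hs _]. lra. }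
destruct (completeness E Eb (ex_intro _ 0 E0)) as [c [Hub Hlub]].
assert (Hc0 : 0 <= c) by (apply Hub; exact E0).
assert (Hct : c <= t) by (apply Hlub; intros s [Hs _]; lra).
assert (Hbelow : forall u, 0 <= u < c -> Cmod (Cminus (f u) (f 0)) <= e * u).
{ intros u Hu. destruct (Rle_or_lt c u) as [h|h]; [lra|].
  apply Classical_Prop.NNPP. intros Hn.
  assert (c <= u); [|lra]. apply Hlub. intros s [Hs Hs2].
  destruct (Rle_or_lt s u) as [h2|h2]; auto. exfalso. apply Hn. apply Hs2. lra. }
assert (Hcc : Cmod (Cminus (f c) (f 0)) <= e * c).
{ destruct (Req_dec c 0) as [Hz|Hz].
  - rewrite Hz. unfold Cminus. rewrite Cplus_opp_r, Cmod_0. lra.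
  - apply Rnot_lt_le. intros Hn.
    destruct (Hc c (conj Hc0 Hct) (Cmod (Cminus (f c) (f 0)) - e * c)) as [d [Hd0 Hd1]]; [lra|].
    set (u := Rmax 0 (c - d/2)).
    assert (Hu1 : 0 <= u) by apply Rmax_l.
    assert (Hu2 : c - d/2 <= u) by apply Rmax_r.
    assert (Hu3 : u < c) by (unfold u; apply Rmax_lub_lt; lra).
    assert (Hu4 : 0 <= u <= t) by lra.
    assert (Hu5 : Rabs (u - c) < d) by (rewrite Rabs_left; lra).
    specialize (Hd1 u Hu4 Hu5).
    specialize (Hbelow u (conj Hu1 Hu3)).
    pose proof (Cmod_tri3 (f c) (f u) (f 0)).
    rewrite <- Cmod_opp in Hd1.
    replace (- Cminus (f u) (f c))%C with (Cminus (f c) (f u)) in Hd1.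
    2:{ destruct (f u), (f c); unfold Cminus, Cplus, Copp; simpl; f_equal; ring. }
    assert (e*u <= e*c) by (apply Rmult_le_compat_l; lra). lra. }
assert (Hc_in : E c) by (split; [lra|]; intros u Hu;
  destruct (Req_dec u c) as [->|hn]; [exact Hcc| apply Hbelow; lra]).
destruct (Rle_lt_or_eq_dec c t Hct) as [Hlt|Heq].
- exfalso. destruct (Hd c (conj Hc0 Hlt) e He) as [d [Hd0 Hd1]].
  set (h := Rmin (d/2) (t - c)).
  assert (h1 : 0 < h) by (apply Rmin_pos; lra).
  assert (h2 : h <= d/2) by apply Rmin_l.
  assert (h3 : h <= t - c) by apply Rmin_r.
  assert (E (c + h)).
  { split. lra. intros u Hu. destruct (Rle_or_lt u c) as [hu|hu].
    - apply (proj2 Hc_in). lra.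
    - specialize (Hd1 (u - c) ltac:(lra)). replace (c + (u - c)) with u in Hd1 by ring.
      pose proof (Cmod_tri3 (f u) (f c) (f 0)). nra. }
  assert (c + h <= c) by (apply Hub; auto). lra.
- subst c. apply (proj2 Hc_in). lra.
Qed.

Lemma rd_const (f : R -> C) t : 0 <= t ->
 (forall s, 0<=s<=t -> forall e, 0<e -> exists d, 0<d /\ forall u, 0<=u<=t -> Rabs(u-s)<d -> Cmod (Cminus (f u) (f s)) < e) ->
 (forall s, 0<=s<t -> forall e, 0<e -> exists d, 0<d /\ forall h, 0<h<d -> Cmod (Cminus (f (s+h)) (f s)) <= e*h) ->
 f t = f 0.
Proof.
intros Ht Hc Hd.
assert (Cmod (Cminus (f t) (f 0)) = 0).
{ apply Rle_antisym; [|apply Cmod_ge_0]. apply Rnot_lt_le. intros Hn.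
  set (k := Cmod (Cminus (f t) (f 0))) in *.
  pose proof (rd_bound f t (k / (2 * (t + 1))) Ht ltac:(apply Rdiv_lt_0_compat; lra) Hc Hd).
  fold k in H.
  assert (k / (2*(t+1)) * t < k); [|lra].
  apply Rmult_lt_reg_r with (2*(t+1)). lra.
  field_simplify; [nra|lra]. }
apply Cmod_eq_0 in H. destruct (f t), (f 0). unfold Cminus, Cplus, Copp in H; simpl in H.
injection H; intros; f_equal; lra.
Qed.
Lemma sqrt2_le2 : sqrt 2 <= 2.
Proof. rewrite <- (sqrt_square 2) at 2 by lra. apply sqrt_le_1_alt. lra. Qed.

Lemma E_lin (m : C) e : 0 < e -> exists d, 0 < d /\ forall h, 0 < h < d ->
  Cmod (Cplus (Cminus (Cexp (Cmult (RtoC (-h)) m)) (RtoC 1)) (Cmult (RtoC h) m)) <= e * h.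
Proof.
intros He. destruct m as [m1 m2].
assert (D1 : derivable_pt_lim (fun h => exp (- h * m1 - 0 * m2) * cos (- h * m2 + 0 * m1)) 0 (- m1)).
{ apply is_derive_Reals. auto_derive; auto. replace (- 0 * m1 + - (0 * m2)) with 0 by ring. replace (- 0 * m2 + 0 * m1) with 0 by ring. rewrite exp_0, cos_0, sin_0. ring. }
assert (D2 : derivable_pt_lim (fun h => exp (- h * m1 - 0 * m2) * sin (- h * m2 + 0 * m1)) 0 (- m2)).
{ apply is_derive_Reals. auto_derive; auto. replace (- 0 * m1 + - (0 * m2)) with 0 by ring. replace (- 0 * m2 + 0 * m1) with 0 by ring. rewrite exp_0, cos_0, sin_0. ring. }
destruct (D1 (e/2) ltac:(lra)) as [d1 Hd1]. destruct (D2 (e/2) ltac:(lra)) as [d2 Hd2].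
exists (Rmin d1 d2). split. apply Rmin_pos; apply cond_pos.
intros h [h0 hd].
assert (hd1 : Rabs h < d1) by (rewrite Rabs_right by lra; eapply Rlt_le_trans; [exact hd| apply Rmin_l]).
assert (hd2 : Rabs h < d2) by (rewrite Rabs_right by lra; eapply Rlt_le_trans; [exact hd| apply Rmin_r]).
specialize (Hd1 h ltac:(lra) hd1). specialize (Hd2 h ltac:(lra) hd2).
rewrite Rplus_0_l in Hd1, Hd2.
replace (- 0 * m1 - 0 * m2) with 0 in Hd1, Hd2 by ring.
replace (- 0 * m2 + 0 * m1) with 0 in Hd1, Hd2 by ring.
rewrite exp_0, cos_0 in Hd1. rewrite sin_0 in Hd2. rewrite Rmult_1_r in Hd1. rewrite Rmult_0_r in Hd2.
eapply Rle_trans. apply Cmod_2Rmax. simpl.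
set (a := exp (- h * m1 - 0 * m2) * cos (- h * m2 + 0 * m1)) in *.
set (b := exp (- h * m1 - 0 * m2) * sin (- h * m2 + 0 * m1)) in *.
assert (Ha : Rabs (a + - (1) + (h * m1 - 0 * m2)) <= e / 2 * h).
{ replace (a + - (1) + (h * m1 - 0 * m2)) with (h * ((a - 1) / h - - m1)) by (field; lra).
  rewrite Rabs_mult, Rabs_right by lra. rewrite Rmult_comm. apply Rmult_le_compat_r; lra. }
assert (Hb : Rabs (b + - 0 + (h * m2 + 0 * m1)) <= e / 2 * h).
{ replace (b + - 0 + (h * m2 + 0 * m1)) with (h * ((b - 0) / h - - m2)) by (field; lra).
  rewrite Rabs_mult, Rabs_right by lra. rewrite Rmult_comm. apply Rmult_le_compat_r; lra. }
pose proof sqrt2_le2.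
assert (Rmax (Rabs (a + - (1) + (h * m1 - 0 * m2))) (Rabs (b + - 0 + (h * m2 + 0 * m1))) <= e/2*h)
  by (apply Rmax_lub; auto).
pose proof (Rle_trans _ _ _ (Rabs_pos _) Ha).
assert (0 <= sqrt 2) by apply sqrt_pos.
set (X := Rmax _ _) in *. assert (0 <= X) by (eapply Rle_trans; [apply Rabs_pos|apply Rmax_l]). nra.
Qed.

Lemma rcont (f : R -> R) s : ex_derive f s -> forall e, 0 < e -> exists d, 0 < d /\
  forall u, Rabs (u - s) < d -> Rabs (f u - f s) < e.
Proof.
intros Hf e He. pose proof (derivable_continuous_pt _ _ (ex_derive_Reals_0 _ _ Hf)) as Hc.
destruct (Hc e He) as [a [Ha Ha2]]. exists a. split. lra.
intros u Hu. destruct (Req_dec u s) as [->|Hn].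
- rewrite Rminus_eq_0, Rabs_R0. lra.
- apply (Ha2 u). split. split. exact I. auto. exact Hu.
Qed.

Lemma Cmod_le2 (z : C) k : Rabs (fst z) <= k -> Rabs (snd z) <= k -> Cmod z <= 2 * k.
Proof.
intros H1 H2. eapply Rle_trans. apply Cmod_2Rmax.
assert (Rmax (Rabs (fst z)) (Rabs (snd z)) <= k) by (apply Rmax_lub; auto).
assert (0 <= Rmax (Rabs (fst z)) (Rabs (snd z))) by (eapply Rle_trans; [apply Rabs_pos|apply Rmax_l]).
pose proof sqrt2_le2. assert (0 <= sqrt 2) by apply sqrt_pos. nra.
Qed.

Lemma Cexp_add z w : Cexp (Cplus z w) = Cmult (Cexp z) (Cexp w).
Proof.
destruct z as [a b], w as [c d]. unfold Cexp, Cplus, Cmult; simpl.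
rewrite exp_plus, cos_plus, sin_plus. f_equal; ring.
Qed.

Lemma e_add (m : C) a b : Cexp (Cmult (RtoC (a + b)) m) =
  Cmult (Cexp (Cmult (RtoC a) m)) (Cexp (Cmult (RtoC b) m)).
Proof.
rewrite <- Cexp_add. f_equal. destruct m; unfold Cmult, Cplus, RtoC; simpl; f_equal; ring.
Qed.

Lemma e_0 (m : C) : Cexp (Cmult (RtoC 0) m) = RtoC 1.
Proof.
destruct m; unfold Cexp, Cmult, RtoC; simpl.
replace (0 * r - 0 * r0) with 0 by ring. replace (0 * r0 + 0 * r) with 0 by ring.
rewrite exp_0, cos_0, sin_0. f_equal; ring.
Qed.

Lemma e_cont (m : C) s e : 0 < e -> exists d, 0 < d /\ forall u, Rabs (u - s) < d ->
  Cmod (Cminus (Cexp (Cmult (RtoC (-u)) m)) (Cexp (Cmult (RtoC (-s)) m))) < e.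
Proof.
intros He. destruct m as [m1 m2].
destruct (rcont (fun u => exp (- u * m1 - 0 * m2) * cos (- u * m2 + 0 * m1)) s
  ltac:(auto_derive; auto) (e/4) ltac:(lra)) as [d1 [Hd1 H1]].
destruct (rcont (fun u => exp (- u * m1 - 0 * m2) * sin (- u * m2 + 0 * m1)) s
  ltac:(auto_derive; auto) (e/4) ltac:(lra)) as [d2 [Hd2 H2]].
exists (Rmin d1 d2). split. apply Rmin_pos; auto.
intros u Hu. 
assert (Hu1 : Rabs (u - s) < d1) by (eapply Rlt_le_trans; [exact Hu|apply Rmin_l]).
assert (Hu2 : Rabs (u - s) < d2) by (eapply Rlt_le_trans; [exact Hu|apply Rmin_r]).
specialize (H1 u Hu1). specialize (H2 u Hu2).
eapply Rle_lt_trans. apply (Cmod_le2 _ (e/4)).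
- simpl. unfold Rminus in H1. apply Rlt_le. exact H1.
- simpl. unfold Rminus in H2. apply Rlt_le. exact H2.
- lra.
Qed.

Lemma ccont_mult (P : R -> Prop) (a b : R -> C) s :
  (forall e, 0 < e -> exists d, 0 < d /\ forall u, P u -> Rabs (u - s) < d -> Cmod (Cminus (a u) (a s)) < e) ->
  (forall e, 0 < e -> exists d, 0 < d /\ forall u, P u -> Rabs (u - s) < d -> Cmod (Cminus (b u) (b s)) < e) ->
  (forall e, 0 < e -> exists d, 0 < d /\ forall u, P u -> Rabs (u - s) < d ->
     Cmod (Cminus (Cmult (a u) (b u)) (Cmult (a s) (b s))) < e).
Proof.
intros Ha Hb e He.
set (A := Cmod (a s)). set (B := Cmod (b s)).
assert (HA : 0 <= A) by apply Cmod_ge_0. assert (HB : 0 <= B) by apply Cmod_ge_0.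
destruct (Ha (e / (2 * (B + 1))) ltac:(apply Rdiv_lt_0_compat; lra)) as [d1 [Hd1 H1]].
destruct (Hb (Rmin 1 (e / (2 * (A + 1)))) ltac:(apply Rmin_pos; [lra|apply Rdiv_lt_0_compat; lra])) as [d2 [Hd2 H2]].
exists (Rmin d1 d2). split. apply Rmin_pos; auto.
intros u Pu Hu.
specialize (H1 u Pu ltac:(eapply Rlt_le_trans; [exact Hu|apply Rmin_l])).
specialize (H2 u Pu ltac:(eapply Rlt_le_trans; [exact Hu|apply Rmin_r])).
replace (Cminus (Cmult (a u) (b u)) (Cmult (a s) (b s))) with
  (Cplus (Cmult (Cminus (a u) (a s)) (b u)) (Cmult (a s) (Cminus (b u) (b s)))).
2:{ destruct (a u), (b u), (a s), (b s); unfold Cminus, Cplus, Cmult, Copp; simpl; f_equal; ring. }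
eapply Rle_lt_trans. apply Cmod_triangle. rewrite !Cmod_mult. fold A.
assert (Hbu : Cmod (b u) <= B + 1).
{ pose proof (Cmod_tri3 (b u) (b s) (RtoC 0)).
  replace (Cminus (b u) (RtoC 0)) with (b u) in H. 2:{ destruct (b u); unfold Cminus, Cplus, Copp, RtoC; simpl; f_equal; ring. }
  replace (Cminus (b s) (RtoC 0)) with (b s) in H. 2:{ destruct (b s); unfold Cminus, Cplus, Copp, RtoC; simpl; f_equal; ring. }
  pose proof (Rmin_l 1 (e / (2 * (A + 1)))). fold B in H. lra. }
assert (X1 : Cmod (Cminus (a u) (a s)) * Cmod (b u) <= e / (2 * (B + 1)) * (B + 1)).
{ apply Rmult_le_compat; try apply Cmod_ge_0; lra. }
assert (X2 : A * Cmod (Cminus (b u) (b s)) <= (A + 1) * (e / (2 * (A + 1)))).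
{ pose proof (Rmin_r 1 (e / (2 * (A + 1)))). apply Rmult_le_compat; try apply Cmod_ge_0; lra. }
replace (e / (2 * (B + 1)) * (B + 1)) with (e/2) in X1 by (field; lra).
replace ((A + 1) * (e / (2 * (A + 1)))) with (e/2) in X2 by (field; lra).
assert (X3 : Cmod (Cminus (a u) (a s)) * Cmod (b u) < e / 2 \/ A * Cmod (Cminus (b u) (b s)) < e/2).
{ left. destruct (Req_dec (Cmod (b u)) 0) as [Z|Z]. rewrite Z. lra.
  apply Rlt_le_trans with (e / (2 * (B + 1)) * Cmod (b u)).
  apply Rmult_lt_compat_r; [pose proof (Cmod_ge_0 (b u)); lra| exact H1].
  apply Rle_trans with (e / (2 * (B + 1)) * (B+1)). apply Rmult_le_compat_l. 
  apply Rlt_le, Rdiv_lt_0_compat; lra. exact Hbu. right; field; lra. }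
lra.
Qed.

From Stdlib Require Import FunctionalExtensionality.

Lemma Cmod_minus_le (a b : C) : Cmod (Cminus a b) <= Cmod a + Cmod b.
Proof. unfold Cminus. eapply Rle_trans. apply Cmod_triangle. rewrite Cmod_opp. lra. Qed.

Lemma ident1 (es E gs gsh mm : C) (h : R) :
  Cminus (Cmult (Cmult es E) gsh) (Cmult es gs) =
  Cmult es (Cminus (Cplus (Cminus (Cminus gsh gs) (Cmult (RtoC h) (Cmult mm gs)))
                          (Cmult (Cplus (Cminus E (RtoC 1)) (Cmult (RtoC h) mm)) gsh))
                   (Cmult (RtoC h) (Cmult mm (Cminus gsh gs)))).
Proof. destruct es, E, gs, gsh, mm; unfold Cminus, Cplus, Cmult, Copp, RtoC; simpl; f_equal; ring. Qed.

Lemma ident2 (gs gsh mm : C) (h : R) : h <> 0 ->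
  Cminus (Cminus gsh gs) (Cmult (RtoC h) (Cmult mm gs)) =
  Cmult (RtoC h) (Cplus (Cmult (RtoC (/ h)) gsh) (Cmult (Cminus (Copp (RtoC (/ h))) mm) gs)).
Proof. intros Hh. destruct gs, gsh, mm; unfold Cminus, Cplus, Cmult, Copp, RtoC; simpl; f_equal; field; auto. Qed.

Theorem mainTheorem2 (M : (R -> C) -> (R -> C)) (m : nat -> C)
  (T : R -> (R -> C) -> (R -> C)) :
  is_multiplier M m -> C0_semigroup T -> generates M T ->
  forall t, 0 <= t -> is_multiplier (T t) (fun n => Cexp (Cmult (RtoC t) (m n))).
Proof.
intros [HMlin HMm] [HTl [HTs [HT0 HTc]]] Hgen t Ht. split. apply HTl; auto.
intros n x.
set (p := fun y : R => RtoC (y ^ n)).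
assert (Hp : analytic p) by apply analytic_pow.
set (mm := m n).
assert (HMp : M p = fscale mm p).
{ apply functional_extensionality; intros y. apply HMm. }
set (g := fun s => T s p x).
set (ee := fun s => Cexp (Cmult (RtoC s) mm)).
set (phi := fun s => Cmult (ee (-s)) (g s)).
assert (Hgc : forall s, 0 <= s -> forall e, 0 < e -> exists d, 0 < d /\
          forall u, 0 <= u -> Rabs (u - s) < d -> Cmod (Cminus (g u) (g s)) < e).
{ intros s Hs e He. destruct (HTc p Hp s Hs (Vp x e) (Vp_nbhd x e He)) as [d [Hd H]].
  exists d. split; auto. intros u Hu Hus. apply (H u Hu Hus). }
assert (key : phi t = phi 0).
{ apply rd_const; auto.
  - intros s Hs e He.
    refine (ccont_mult (fun u => 0 <= u <= t) (fun u => ee (-u)) g s _ _ e He).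
    + intros e2 He2. destruct (e_cont mm s e2 He2) as [d [Hd H]]. exists d; split; auto.
      intros u _ Hu; apply H; auto.
    + intros e2 He2. destruct (Hgc s ltac:(lra) e2 He2) as [d [Hd H]]. exists d; split; auto.
      intros u Hu Hus; apply H; auto; lra.
  - intros s Hs e He.
    set (K := Cmod (ee (-s))). set (G := Cmod (g s)). set (mu := Cmod mm).
    assert (HK : 0 <= K) by apply Cmod_ge_0. assert (HG : 0 <= G) by apply Cmod_ge_0.
    assert (Hmu : 0 <= mu) by apply Cmod_ge_0.
    set (e1 := e / ((K + 1) * (G + 3))).
    assert (He1 : 0 < e1) by (apply Rdiv_lt_0_compat; nra).
    destruct (proj2 (proj2 (HTl s ltac:(lra))) (Vp x e1) (Vp_nbhd x e1 He1)) as [W [HW HWV]].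
    destruct (Hgen p Hp W HW) as [d1 [Hd1 H1]].
    destruct (E_lin mm e1 He1) as [d2 [Hd2 H2]].
    set (eta := Rmin 1 (e1 / (mu + 1))).
    assert (Heta : 0 < eta) by (apply Rmin_pos; [lra|apply Rdiv_lt_0_compat; lra]).
    destruct (Hgc s ltac:(lra) eta Heta) as [d3 [Hd3 H3]].
    exists (Rmin d1 (Rmin d2 d3)). split. repeat apply Rmin_pos; auto.
    intros h [h0 hd].
    assert (hd1 : h < d1) by (eapply Rlt_le_trans; [exact hd|apply Rmin_l]).
    assert (hd2 : h < d2) by (eapply Rlt_le_trans; [exact hd|eapply Rle_trans; [apply Rmin_r|apply Rmin_l]]).
    assert (hd3 : h < d3) by (eapply Rlt_le_trans; [exact hd|eapply Rle_trans; [apply Rmin_r|apply Rmin_r]]).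
    specialize (HWV _ (H1 h h0 hd1)). destruct HWV as [_ HA].
    set (q := fsub (fscale (RtoC (/ h)) (fsub (T h p) p)) (M p)) in HA.
    assert (Hq : q = fadd (fscale (RtoC (/ h)) (T h p)) (fscale (Cminus (Copp (RtoC (/ h))) mm) p)).
    { unfold q. rewrite HMp. apply functional_extensionality; intros y.
      unfold fadd, fsub, fscale. destruct (T h p y), (p y), mm; unfold Cminus, Cplus, Cmult, Copp, RtoC; simpl; f_equal; ring. }
    rewrite Hq, (proj1 (proj2 (HTl s ltac:(lra)))) in HA; auto.
    2:{ apply (proj1 (HTl h ltac:(lra))); auto. }
    rewrite HTs in HA; auto; try lra.
    fold (g (s + h)) in HA. fold (g s) in HA.
    assert (HA' : Cmod (Cminus (Cminus (g (s + h)) (g s)) (Cmult (RtoC h) (Cmult mm (g s)))) < e1 * h).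
    { rewrite (ident2 _ _ _ h) by lra. rewrite Cmod_mult, Cmod_R, Rabs_right by lra. rewrite (Rmult_comm e1). apply Rmult_lt_compat_l; auto. }
    specialize (H2 h (conj h0 hd2)).
    specialize (H3 (s + h) ltac:(lra) ltac:(rewrite Rabs_right; lra)).
    unfold phi. replace (- (s + h)) with (- s + - h) by ring.
    unfold ee at 1. rewrite e_add. fold (ee (-s)) (ee (-h)).
    rewrite (ident1 (ee (-s)) (ee (-h)) (g s) (g (s+h)) mm h). rewrite Cmod_mult. fold K.
    set (A := Cminus (Cminus (g (s + h)) (g s)) (Cmult (RtoC h) (Cmult mm (g s)))) in *.
    set (B := Cplus (Cminus (ee (- h)) (RtoC 1)) (Cmult (RtoC h) mm)) in *.
    set (D := Cminus (g (s + h)) (g s)) in *.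
    assert (Hgsh : Cmod (g (s + h)) <= G + 1).
    { pose proof (Cmod_tri3 (g (s + h)) (g s) (RtoC 0)).
      replace (Cminus (g (s + h)) (RtoC 0)) with (g (s + h)) in H.
      2:{ destruct (g (s + h)); unfold Cminus, Cplus, Copp, RtoC; simpl; f_equal; ring. }
      replace (Cminus (g s) (RtoC 0)) with (g s) in H.
      2:{ destruct (g s); unfold Cminus, Cplus, Copp, RtoC; simpl; f_equal; ring. }
      pose proof (Rmin_l 1 (e1 / (mu + 1))). fold G D in H. fold eta in H0. lra. }
    assert (HX : Cmod (Cminus (Cplus A (Cmult B (g (s + h)))) (Cmult (RtoC h) (Cmult mm D))) <= e1 * h * (G + 3)).
    { eapply Rle_trans. apply Cmod_minus_le. eapply Rle_trans.
      apply Rplus_le_compat_r. apply Cmod_triangle.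
      rewrite !Cmod_mult, Cmod_R, Rabs_right by lra. fold mu.
      assert (Cmod B * Cmod (g (s + h)) <= e1 * h * (G + 1)).
      { apply Rmult_le_compat; try apply Cmod_ge_0; auto. }
      assert (mu * Cmod D <= e1).
      { pose proof (Rmin_r 1 (e1 / (mu + 1))). fold eta in H0.
        apply Rle_trans with ((mu + 1) * (e1 / (mu + 1))).
        apply Rmult_le_compat; try apply Cmod_ge_0; lra.
        right; field; lra. }
      assert (h * (mu * Cmod D) <= h * e1) by (apply Rmult_le_compat_l; lra).
      nra. }
    apply Rle_trans with (K * (e1 * h * (G + 3))).
    apply Rmult_le_compat_l; auto.
    unfold e1. replace (K * (e / ((K + 1) * (G + 3)) * h * (G + 3))) with (e * h * (K / (K+1))) by (field; lra).
    assert (K / (K+1) <= 1) by (apply Rmult_le_reg_r with (K+1); [lra| unfold Rdiv; rewrite Rmult_assoc, Rinv_l by lra; lra]).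
    assert (0 <= e * h) by nra. nra. }
assert (Hg0 : g 0 = RtoC (x ^ n)) by (unfold g; rewrite HT0; auto).
unfold phi in key. rewrite Ropp_0, Hg0 in key. unfold ee at 2 in key. rewrite e_0 in key.
change (T t (fun y : R => RtoC (y ^ n)) x) with (g t).
assert (Hee : Cmult (ee t) (ee (-t)) = RtoC 1).
{ unfold ee. rewrite <- e_add. replace (t + - t) with 0 by ring. apply e_0. }
transitivity (Cmult (Cmult (ee t) (ee (-t))) (g t)).
- rewrite Hee, Cmult_1_l. reflexivity.
- rewrite <- Cmult_assoc, key, Cmult_1_l. reflexivity.
Qed.
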